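(* Let $\mathcal V$ be a finite set of nodes, $\mathcal P$ a finite set of labels, $\mathcal E$ a set of unordered pairs of nodes, and $\theta_{ip},\theta_{ij,pq}\in\mathbb R$ arbitrary. For $\vec\lambda\in\mathbb R^{\mathcal V}$, let $L(\cdot,\vec\lambda)$ be the pairwise pseudo-Boolean function $$L(\vec y,\vec\lambda)=\sum_{i\in\mathcal V}\sum_{p\in\mathcal P}\theta_{ip}y_{ip}+\sum_{\{i,j\}\in\mathcal E}\sum_{p,q\in\mathcal P}\theta_{ij,pq}y_{ip}y_{jq}+\sum_{i\in\mathcal V}\lambda_i\Big(\sum_{p\in\mathcal P}y_{ip}-1\Big)$$ of binary variables $\vec y$, and let $D_{QPBO}(\vec\lambda)$ be the optimal value of the standard LP relaxation of $\min_{\vec y}L(\vec y,\vec\lambda)$. Then $\max_{\vec\lambda\in\mathbb R^{\mathcal V}}D_{QPBO}(\vec\lambda)$ equals the optimal value of the linear program $$\min_{\vec y}\ \sum_{i\in\mathcal V}\sum_{p\in\mathcal P}\theta_{ip}y_{ip}+\sum_{\{i,j\}\in\mathcal E}\sum_{p,q\in\mathcal P}\theta_{ij,pq}y_{ij,pq}$$ subject to $y_{ip},y_{ij,pq}\in[0,1]$; $y_{ij,pq}\le y_{ip}$ and $y_{ij,pq}\le y_{jq}$ for all $\{i,j\}\in\mathcal E$, $p,q\in\mathcal P$; $y_{ij,pq}\ge y_{ip}+y_{jq}-1$ for all $\{i,j\}\in\mathcal E$, $p,q\in\mathcal P$; and $\sum_{p\in\mathcal P}y_{ip}=1$ for all $i\in\mathcal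 V$.
   Context: The standard LP relaxation of minimizing a pairwise pseudo-Boolean function $F(\vec y)=c+\sum_{i\in\mathcal A}a_iy_i+\sum_{\{i,j\}\in\mathcal B}b_{ij}y_iy_j$ over $\vec y\in\{0,1\}^{\mathcal A}$ (with $\mathcal B$ a set of pairs from $\mathcal A$, $c$ a constant) is: minimize $c+\sum_i a_iz_{i1}+\sum_{\{i,j\}}b_{ij}z_{ij,11}$ over nonnegative variables $z_{i1},z_{i0},z_{ij,11},z_{ij,10},z_{ij,01},z_{ij,00}$ subject to $z_{i1}+z_{i0}=1$, $z_{ij,10}+z_{ij,11}=z_{i1}$, $z_{ij,01}+z_{ij,00}=z_{i0}$, $z_{ij,01}+z_{ij,11}=z_{j1}$, $z_{ij,00}+z_{ij,10}=z_{j0}$. Here it is applied with variables $y_{ip}$ indexed by $(i,p)\in\mathcal V\times\mathcal P$ and pairs $\{(i,p),(j,q)\}$ for $\{i,j\}\in\mathcal E$. (This lower bound is the one computed by the QPBO algorithm; the method is called nonsubmodular relaxation.) *)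

(* Defs.v *)
From HB Require Import structures.
From mathcomp Require Import all_boot all_order all_algebra.
From mathcomp Require Import all_classical all_reals.
Set Implicit Arguments. Unset Strict Implicit. Unset Printing Implicit Defensive.
Import Order.TTheory GRing.Theory Num.Theory.
Local Open Scope ring_scope.
Local Open Scope classical_set_scope.

Section Defs.
Variable R : realType.

(* ---------- Standard LP relaxation of a pairwise pseudo-Boolean function ----
   F(y) = c + sum_{u in A} a u y_u + sum_{(u,v) in B} b u v y_u y_v,
   where each unordered pair {u,v} of the pair set is listed once, as an
   ordered pair (u,v) in B.  Variables:  z u true = z_{u1}, z u false = z_{u0},
   zz u v x y = z_{uv,xy}  (x refers to u, y refers to v). *)
Definition pb_lp_feasible (A : finType) (B : {set A * A})
    (z : A -> bool -> R) (zz : A -> A -> bool -> bool -> R) : Prop :=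
  (forall u x, 0 <= z u x) /\
  (forall u v x y, (u, v) \in B -> 0 <= zz u v x y) /\
  (forall u, z u true + z u false = 1) /\
  (forall u v, (u, v) \in B ->
     [/\ zz u v true false + zz u v true true = z u true,
         zz u v false true + zz u v false false = z u false,
         zz u v false true + zz u v true true = z v true &
         zz u v false false + zz u v true false = z v false]).

Definition pb_lp_objective (A : finType) (B : {set A * A})
    (c : R) (a : A -> R) (b : A -> A -> R)
    (z : A -> bool -> R) (zz : A -> A -> bool -> bool -> R) : R :=
  c + \sum_(u : A) a u * z u true
    + \sum_(uv in B) b uv.1 uv.2 * zz uv.1 uv.2 true true.

(* optimal value (the minimum; the feasible set is nonempty and compact) *)
Definition pb_lp_value (A : finType) (B : {set A * A})
    (c : R) (a : A -> R) (b : A -> A -> R) : R :=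
  inf [set t : R | exists z zz, pb_lp_feasible B z zz /\
                                t = pb_lp_objective B c a b z zz].

(* ---------- The Lagrangian L(., lambda) as a pairwise pseudo-Boolean function
   on variables y_{ip}, (i,p) in V x P, with pairs {(i,p),(j,q)}, {i,j} in E.
   E is given by one orientation (i,j) of each unordered edge. *)
Definition qpbo_pairs (V P : finType) (E : {set V * V}) : {set (V * P) * (V * P)} :=
  [set uv : (V * P) * (V * P) | (uv.1.1, uv.2.1) \in E].

Definition D_QPBO (V P : finType) (E : {set V * V})
    (th1 : V -> P -> R) (th2 : V -> V -> P -> P -> R) (lam : V -> R) : R :=
  pb_lp_value (qpbo_pairs P E)
    (- \sum_(i : V) lam i)
    (fun u : V * P => th1 u.1 u.2 + lam u.1)
    (fun u v : V * P => th2 u.1 v.1 u.2 v.2).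

Definition local_lp_feasible (V P : finType) (E : {set V * V})
    (y : V -> P -> R) (yy : V -> V -> P -> P -> R) : Prop :=
  (forall i p, 0 <= y i p <= 1) /\
  (forall i j p q, (i, j) \in E ->
     [/\ 0 <= yy i j p q <= 1,
         yy i j p q <= y i p, yy i j p q <= y j q &
         y i p + y j q - 1 <= yy i j p q]) /\
  (forall i, \sum_(p : P) y i p = 1).

Definition local_lp_objective (V P : finType) (E : {set V * V})
    (th1 : V -> P -> R) (th2 : V -> V -> P -> P -> R)
    (y : V -> P -> R) (yy : V -> V -> P -> P -> R) : R :=
  \sum_(i : V) \sum_(p : P) th1 i p * y i p
  + \sum_(ij in E) \sum_(p : P) \sum_(q : P) th2 ij.1 ij.2 p q * yy ij.1 ij.2 p q.

Definition local_lp_value (V P : finType) (E : {set V * V})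
    (th1 : V -> P -> R) (th2 : V -> V -> P -> P -> R) : R :=
  inf [set t : R | exists y yy, local_lp_feasible E y yy /\
                                t = local_lp_objective E th1 th2 y yy].

End Defs.

(* Main.v *)
Require Import Defs.
From HB Require Import structures.
From mathcomp Require Import all_boot all_order all_algebra.
From mathcomp Require Import all_classical all_reals.
From mathcomp Require Import lra.
Set Implicit Arguments. Unset Strict Implicit. Unset Printing Implicit Defensive.
Import Order.TTheory GRing.Theory Num.Theory.
Local Open Scope ring_scope.

Section Farkas.
Variable R : realType.

Lemma sum_delta (I : finType) (j : I) (F : I -> R) :
  \sum_i (i == j)%:R * F i = F j.
Proof.
rewrite (bigD1 j) //= eqxx mul1r big1 ?addr0 // => i /negbTE ->; by rewrite mul0r.
Qed.

Lemma between (L U : seq R) :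
  (forall l u, l \in L -> u \in U -> l <= u) ->
  exists t, (forall l, l \in L -> l <= t) /\ (forall u, u \in U -> t <= u).
Proof.
elim: L => [|l L IH] H.
  elim: U {H} => [|u U IHU]; first by exists 0.
  have [t [_ Ht]] := IHU; exists (Num.min t u); split => // w.
  rewrite inE => /orP[/eqP->|wU]; first by rewrite ge_min lexx orbT.
  by rewrite ge_min Ht.
have [t [Ht1 Ht2]] : exists t, (forall l, l \in L -> l <= t) /\ (forall u, u \in U -> t <= u).
  by apply: IH => l' u lL uU; apply: H => //; rewrite inE lL orbT.
exists (Num.max t l); split.
  move=> w; rewrite inE => /orP[/eqP->|wL]; first by rewrite le_max lexx orbT.
  by rewrite le_max Ht1.
by move=> u uU; rewrite ge_max Ht2 //= H // inE eqxx.
Qed.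

Definition aff (X : Type) := ((X -> R) * R)%type.

Definition eval (X : finType) (S : {set X}) (g : aff X) (x : X -> R) : R :=
  \sum_(k in S) g.1 k * x k + g.2.

Theorem farkas (n : nat) (X : finType) (S : {set X}) (J : finType) (g : J -> aff X) :
  #|S| = n ->
  ~ (exists x, forall j, 0 <= eval S (g j) x) ->
  exists mu : J -> R, (forall j, 0 <= mu j) /\
    (forall k, k \in S -> \sum_j mu j * (g j).1 k = 0) /\
    \sum_j mu j * (g j).2 < 0.
Proof.
elim: n S J g => [|n IH] S J g cS Hinf.
  have S0 : S = finset.set0 by apply/eqP; rewrite -cards_eq0 cS.
  have [j0 Hj0] : exists j0, (g j0).2 < 0.
    apply: contra_notP Hinf => H; exists (fun _ => 0) => j.
    rewrite /eval S0 big_set0 add0r.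
    by rewrite leNgt; apply/negP => Hj; apply: H; exists j.
  exists (fun j => (j == j0)%:R); split; first by move=> j; rewrite ler0n.
  split; first by move=> k; rewrite S0 inE.
  by rewrite sum_delta.
have [k kS] : exists k, k \in S.
  by apply/set0Pn; rewrite -cards_eq0 cS.
pose S' := S :\ k.
have cS' : #|S'| = n by move: cS; rewrite (cardsD1 k S) kS add1n => -[].
pose zero : aff X := (fun _ => 0, 0).
pose c2 p q : aff X := (fun l => - (g q).1 k * (g p).1 l + (g p).1 k * (g q).1 l,
                       - (g q).1 k * (g p).2 + (g p).1 k * (g q).2).
pose g' (j' : J + (J * J)%type) : aff X := match j' with
  | inl j => if (g j).1 k == 0 then g j else zero
  | inr pq => if (0 < (g pq.1).1 k) && ((g pq.2).1 k < 0) then c2 pq.1 pq.2 else zero end.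
have evc2 : forall p q x, eval S' (c2 p q) x =
    - (g q).1 k * eval S' (g p) x + (g p).1 k * eval S' (g q) x.
  move=> p q x; rewrite /eval /c2 /=.
under eq_bigr do rewrite mulrDl -!mulrA.
rewrite big_split /= -!mulr_sumr; lra.
have ev0 : forall x, eval S' zero x = 0.
  by move=> x; rewrite /eval /zero /= big1 ?addr0 // => l _; rewrite mul0r.
have Hinf' : ~ (exists x, forall j', 0 <= eval S' (g' j') x).
  move=> [x Hx].
  pose E j := eval S' (g j) x.
  pose L := [seq - E p / (g p).1 k | p <- enum J & 0 < (g p).1 k].
  pose U := [seq E q / (- (g q).1 k) | q <- enum J & (g q).1 k < 0].
  have [t [Ht1 Ht2]] : exists t, (forall l, l \in L -> l <= t) /\ (forall u, u \in U -> t <= u).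
    apply: between => l u /mapP[p]; rewrite mem_filter => /andP[ap _] ->.
    move=> /mapP[q]; rewrite mem_filter => /andP[aq _] ->.
    have := Hx (inr (p, q)); rewrite /g' /= ap aq /= evc2 -/(E p) -/(E q) => H.
    have aq' : 0 < - (g q).1 k by rewrite oppr_gt0.
    rewrite ler_pdivrMr // mulrAC ler_pdivlMr //; lra.
  apply: Hinf; exists (fun l => if l == k then t else x l) => j.
  have -> : eval S (g j) (fun l => if l == k then t else x l) = E j + (g j).1 k * t.
    rewrite /E /eval (big_setD1 k kS) /= eqxx.
    rewrite (eq_bigr (fun l => (g j).1 l * x l)); first by lra.
    by move=> l; rewrite in_setD1 => /andP[/negbTE -> _].
  case: (ltgtP ((g j).1 k) 0) => aj.
  - have aj' : 0 < - (g j).1 k by rewrite oppr_gt0.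
    have := Ht2 (E j / - (g j).1 k); rewrite ler_pdivlMr //.
    have -> : E j / - (g j).1 k \in U by apply: map_f; rewrite mem_filter aj mem_enum.
    move=> /(_ isT) H; lra.
  - have := Ht1 (- E j / (g j).1 k); rewrite ler_pdivrMr //.
    have -> : - E j / (g j).1 k \in L by apply: map_f; rewrite mem_filter aj mem_enum.
    move=> /(_ isT) H; lra.
  - have := Hx (inl j); rewrite /g' /= aj eqxx => H; rewrite -/(E j) in H; lra.
have [mu' [mu'0 [mu'S mu'c]]] := IH S' _ g' cS' Hinf'.
pose nu (j' : J + (J * J)%type) (j0 : J) : R := match j' with
  | inl j => if (g j).1 k == 0 then (j0 == j)%:R else 0
  | inr pq => if (0 < (g pq.1).1 k) && ((g pq.2).1 k < 0) then
       - (g pq.2).1 k * (j0 == pq.1)%:R + (g pq.1).1 k * (j0 == pq.2)%:R else 0 end.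
have nu0 : forall j' j0, 0 <= nu j' j0.
  move=> [j|[p q]] j0 /=; first by case: ifP => _; rewrite ?ler0n.
  case: ifP => // /andP[ap aq].
  by apply: addr_ge0; apply: mulr_ge0; rewrite ?ler0n ?oppr_ge0 ?ltW.
have nuF : forall (F : J -> R) j', \sum_j0 nu j' j0 * F j0 = match j' with
  | inl j => if (g j).1 k == 0 then F j else 0
  | inr pq => if (0 < (g pq.1).1 k) && ((g pq.2).1 k < 0) then
       - (g pq.2).1 k * F pq.1 + (g pq.1).1 k * F pq.2 else 0 end.
  move=> F [j|[p q]] /=.
    case: ifP => _; first by rewrite sum_delta.
    by rewrite big1 // => i _; rewrite mul0r.
  case: ifP => _; last by rewrite big1 // => i _; rewrite mul0r.
  rewrite (eq_bigr (fun i => - (g q).1 k * ((i == p)%:R * F i) + (g p).1 k * ((i == q)%:R * F i))).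
    by rewrite big_split /= -!mulr_sumr !sum_delta.
  move=> i _; lra.
pose mu j0 := \sum_j' mu' j' * nu j' j0.
have muF : forall F : J -> R, \sum_j0 mu j0 * F j0 = \sum_j' mu' j' * \sum_j0 nu j' j0 * F j0.
  move=> F; rewrite /mu; under eq_bigr do rewrite mulr_suml.
  rewrite exchange_big; apply: eq_bigr => j' _; rewrite mulr_sumr.
  by apply: eq_bigr => j0 _; rewrite mulrA.
exists mu; split.
  by move=> j0; apply: sumr_ge0 => j' _; apply: mulr_ge0.
split.
  move=> l lS; rewrite muF.
  have [->|lk] := eqVneq l k.
    apply: big1 => j' _; rewrite nuF; case: j' => [j|[p q]] /=.
      by case: ifP => [/eqP->|]; rewrite mulr0.
    by case: ifP; rewrite ?mulr0 // => _; rewrite (mulrC ((g p).1 k)) mulNr addNr mulr0.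
  transitivity (\sum_j' mu' j' * (g' j').1 l); last by apply: mu'S; rewrite in_setD1 lk.
  apply: eq_bigr => j' _; rewrite nuF; case: j' => [j|[p q]] /=; first by case: ifP.
  by case: ifP.
rewrite muF (eq_bigr (fun j' => mu' j' * (g' j').2)) //.
move=> j' _; rewrite nuF; case: j' => [j|[p q]] /=; first by case: ifP.
by case: ifP.
Qed.


Lemma sum_unit (F : unit -> R) : \sum_i F i = F tt.
Proof. by rewrite (big_pred1 tt) // => -[]. Qed.

Lemma eval_sum (X : finType) (f : aff (X + unit)) x :
  eval [set: X + unit] f x = \sum_k f.1 (inl k) * x (inl k) + f.1 (inr tt) * x (inr tt) + f.2.
Proof.
rewrite /eval (eq_bigl predT); last by move=> k; rewrite finset.in_setT.
by rewrite big_sumType /= sum_unit.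
Qed.

Lemma evalT (X : finType) (f : aff X) x :
  eval [set: X] f x = \sum_k f.1 k * x k + f.2.
Proof. by rewrite /eval (eq_bigl predT) // => k; rewrite finset.in_setT. Qed.

Lemma cons_form (X J : finType) (g : J -> aff X) (c : X -> R) (v : R) :
 (exists x0, forall j, 0 <= eval [set: X] (g j) x0) ->
 (forall x, (forall j, 0 <= eval [set: X] (g j) x) -> v <= \sum_k c k * x k) ->
 exists mu : J -> R, exists m0 : R, (forall j, 0 <= mu j) /\ 0 <= m0 /\
   forall x, \sum_k c k * x k - v = m0 + \sum_j mu j * eval [set: X] (g j) x.
Proof.
move=> [x0 Hx0] Hlb.
pose h (j' : J + bool) : aff (X + unit) := match j' with
  | inl j => (fun k => match k with inl k' => (g j).1 k' | inr _ => (g j).2 end, 0)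
  | inr true => (fun k => match k with inl _ => 0 | inr _ => 1 end, 0)
  | inr false => (fun k => match k with inl k' => - c k' | inr _ => v end, -1) end.
have Hinf : ~ (exists x, forall j', 0 <= eval [set: X + unit] (h j') x).
  move=> [x Hx].
  pose tau := x (inr tt); pose y k := x (inl k).
  have Hg : forall j, 0 <= \sum_k (g j).1 k * y k + (g j).2 * tau.
    by move=> j; have := Hx (inl j); rewrite eval_sum /= addr0.
  have Ht : 0 <= tau by have := Hx (inr true); rewrite eval_sum /= big1 ?mul1r ?add0r ?addr0 // => k _; rewrite mul0r.
  have Hc : \sum_k c k * y k + 1 <= v * tau.
    have := Hx (inr false); rewrite eval_sum /=.
    rewrite (eq_bigr (fun k => - (c k * y k))); last by move=> k _; rewrite mulNr.
    rewrite sumrN; rewrite -/tau; lra.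
  case: (ltgtP tau 0) => tau0; first by lra.
  - have := Hlb (fun k => y k / tau).
    have -> : \sum_k c k * (y k / tau) = (\sum_k c k * y k) / tau.
      by rewrite mulr_suml; apply: eq_bigr => k _; rewrite mulrA.
    rewrite ler_pdivlMr //.
    have H : (forall j, 0 <= eval [set: X] (g j) (fun k => y k / tau)).
      move=> j; rewrite evalT.
      have -> : \sum_k (g j).1 k * (y k / tau) + (g j).2 = (\sum_k (g j).1 k * y k + (g j).2 * tau) / tau.
        rewrite mulrDl mulfK ?gt_eqF // mulr_suml; congr (_ + _).
        by apply: eq_bigr => k _; rewrite mulrA.
      by apply: divr_ge0; [apply: Hg | apply: ltW].
    move=> /(_ H); lra.
  - pose s := `|\sum_k c k * x0 k - v| + 1.
    have s0 : 0 <= s by rewrite /s; apply: addr_ge0.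
    have := Hlb (fun k => x0 k + s * y k).
    have -> : \sum_k c k * (x0 k + s * y k) = \sum_k c k * x0 k + s * \sum_k c k * y k.
      rewrite mulr_sumr -big_split; apply: eq_bigr => k _ /=; rewrite mulrDr; lra.
    have H : (forall j, 0 <= eval [set: X] (g j) (fun k => x0 k + s * y k)).
      move=> j; have := Hx0 j; rewrite !evalT.
      have -> : \sum_k (g j).1 k * (x0 k + s * y k) = \sum_k (g j).1 k * x0 k + s * \sum_k (g j).1 k * y k.
        rewrite mulr_sumr -big_split; apply: eq_bigr => k _ /=; rewrite mulrDr; lra.
      have := Hg j; rewrite tau0 mulr0 addr0 => Hg'.
      have : 0 <= s * \sum_k (g j).1 k * y k by apply: mulr_ge0.
      lra.
    move=> /(_ H).
    have : s * \sum_k c k * y k <= s * (-1).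
      apply: ler_wpM2l => //; move: Hc; rewrite tau0 mulr0; lra.
    have := ler_norm (\sum_k c k * x0 k - v).
    rewrite /s; lra.
have [nu [nu0 [nuS nuc]]] := farkas (erefl _) Hinf.
pose nf := nu (inr false); pose nt := nu (inr true).
have Hc : nu (inr false) * -1 < 0.
  move: nuc; rewrite big_sumType /= big_bool /= big1 ?mulr0 ?add0r //.
  by move=> j _; rewrite mulr0.
have nfp : 0 < nf by rewrite /nf; lra.
have Hk : forall k, nf * c k = \sum_j nu (inl j) * (g j).1 k.
  move=> k; have := nuS (inl k) (finset.in_setT _).
  rewrite big_sumType /= big_bool /= mulr0 add0r mulrN => H.
  rewrite /nf; lra.
have Htt : \sum_j nu (inl j) * (g j).2 + nt + nf * v = 0.
  have := nuS (inr tt) (finset.in_setT _).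
  rewrite big_sumType /= big_bool /= mulr1 => H; rewrite /nt /nf; lra.
exists (fun j => nu (inl j) / nf), (nt / nf); split.
  by move=> j; apply: divr_ge0; [apply: nu0 | apply: ltW].
split; first by apply: divr_ge0; [apply: nu0 | apply: ltW].
move=> x; apply: (mulfI (negbT (gt_eqF nfp))).
have -> : nf * (\sum_k c k * x k - v) = \sum_k \sum_j nu (inl j) * (g j).1 k * x k - nf * v.
  rewrite mulrBr mulr_sumr; congr (_ - _); apply: eq_bigr => k _.
  by rewrite mulrA Hk mulr_suml.
have -> : nf * (nt / nf + \sum_j nu (inl j) / nf * eval [set: X] (g j) x)
    = nt + \sum_j nu (inl j) * eval [set: X] (g j) x.
  rewrite mulrDr mulr_sumr mulrCA mulfV ?gt_eqF // mulr1; congr (_ + _).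
  by apply: eq_bigr => j _; rewrite mulrA mulrCA mulfV ?gt_eqF // mulr1.
rewrite exchange_big /=.
under [\sum_j nu (inl j) * _]eq_bigr do rewrite evalT mulrDr mulr_sumr.
rewrite big_split /=.
have -> : \sum_j \sum_k nu (inl j) * ((g j).1 k * x k) = \sum_j \sum_k nu (inl j) * (g j).1 k * x k.
  by apply: eq_bigr => j _; apply: eq_bigr => k _; rewrite mulrA.
rewrite -/nf -/nt; lra.
Qed.

End Farkas.

Section App.
Variable R : realType.
Variables V P : finType.
Variable E : {set V * V}.
Variable th1 : V -> P -> R.
Variable th2 : V -> V -> P -> P -> R.

Definition X := ((V * P) + ((V * P) * (V * P)))%type.
Definition ind (u v : V * P) : bool := (u.1, v.1) \in E.

Definition cvec (k : X) : R := match k with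
  | inl u => th1 u.1 u.2
  | inr uv => if ind uv.1 uv.2 then th2 uv.1.1 uv.2.1 uv.1.2 uv.2.2 else 0 end.

Definition aff3 (c1 : R) (k1 : X) (c2 : R) (k2 : X) (c3 : R) (k3 : X) (d : R) : aff R X :=
  (fun k => c1 * (k == k1)%:R + c2 * (k == k2)%:R + c3 * (k == k3)%:R, d).

Lemma sum_delta' (k0 : X) (c : R) (x : X -> R) :
  \sum_k c * (k == k0)%:R * x k = c * x k0.
Proof.
rewrite -(sum_delta k0 (fun k => c * x k)); apply: eq_bigr => k _.
by rewrite mulrCA mulrA.
Qed.

Lemma eval_aff3 c1 k1 c2 k2 c3 k3 d x :
  eval [set: X] (aff3 c1 k1 c2 k2 c3 k3 d) x = c1 * x k1 + c2 * x k2 + c3 * x k3 + d.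
Proof.
rewrite evalT /aff3 /=.
under eq_bigr do rewrite !mulrDl.
by rewrite !big_split /= !sum_delta'.
Qed.

Definition J := (((V * P) * bool) + ((((V * P) * (V * P)) * option (bool * bool)) + (V * bool)))%type.


Definition gfam (j : J) : aff R X := match j with
  | inl (u, b) => if b then aff3 1 (inl u) 0 (inl u) 0 (inl u) 0
                  else aff3 (-1) (inl u) 0 (inl u) 0 (inl u) 1
  | inr (inl (uv, o)) => if ind uv.1 uv.2 then
      match o with
      | None => aff3 1 (inr uv) 0 (inr uv) 0 (inr uv) 0
      | Some (true, true) => aff3 (-1) (inr uv) 0 (inr uv) 0 (inr uv) 1
      | Some (true, false) => aff3 1 (inl uv.1) (-1) (inr uv) 0 (inr uv) 0
      | Some (false, true) => aff3 1 (inl uv.2) (-1) (inr uv) 0 (inr uv) 0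
      | Some (false, false) => aff3 1 (inr uv) (-1) (inl uv.1) (-1) (inl uv.2) 1
      end
    else (fun _ => 0, 0)
  | inr (inr (i, b)) => (fun k => match k with
                           | inl u => if u.1 == i then (if b then 1 else -1) else 0
                           | inr _ => 0 end, if b then -1 else 1)
  end.

Definition feas (x : X -> R) := forall j, 0 <= eval [set: X] (gfam j) x.

Lemma eval_box u b x : eval [set: X] (gfam (inl (u, b))) x =
  if b then x (inl u) else 1 - x (inl u).
Proof. by case: b; rewrite /= eval_aff3; lra. Qed.

Lemma eval_pair u v o x : ind u v ->
  eval [set: X] (gfam (inr (inl ((u, v), o)))) x =
  match o with
  | None => x (inr (u, v))
  | Some (true, true) => 1 - x (inr (u, v))
  | Some (true, false) => x (inl u) - x (inr (u, v))
  | Some (false, true) => x (inl v) - x (inr (u, v))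
  | Some (false, false) => x (inr (u, v)) - x (inl u) - x (inl v) + 1
  end.
Proof. by move=> h; rewrite /= h; case: o => [[[] []]|]; rewrite eval_aff3 /=; lra. Qed.

Lemma eval_pair0 u v o x : ~~ ind u v ->
  eval [set: X] (gfam (inr (inl ((u, v), o)))) x = 0.
Proof.
move=> h; rewrite /= (negbTE h) evalT /= big1 ?addr0 // => k _; by rewrite mul0r.
Qed.

Lemma eval_eq i b x : eval [set: X] (gfam (inr (inr (i, b)))) x =
  (if b then 1 else -1) * (\sum_p x (inl (i, p)) - 1).
Proof.
rewrite evalT /= big_sumType /=.
rewrite [X in _ + X + _]big1 ?addr0; last by move=> uv _; rewrite mul0r.
rewrite (eq_bigr (fun u => (if u.1 == i then (if b then 1 else -1) else 0) * x (inl (u.1, u.2)))); last by move=> [a p].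
rewrite -(pair_bigA _ (fun a p => (if a == i then (if b then 1 else -1) else 0) * x (inl (a, p)))) /=.
rewrite (bigD1 i) //= eqxx [\sum_(a | a != i) _]big1 ?addr0; last first.
  by move=> a ha; rewrite (negbTE ha); apply: big1 => p _; rewrite mul0r.
rewrite -mulr_sumr; case: b; lra.
Qed.

Definition xofy (y : V -> P -> R) (yy : V -> V -> P -> P -> R) (k : X) : R :=
  match k with inl u => y u.1 u.2 | inr uv => yy uv.1.1 uv.2.1 uv.1.2 uv.2.2 end.

Lemma L1 x : feas x -> local_lp_feasible E (fun i p => x (inl (i, p)))
                                          (fun i j p q => x (inr ((i, p), (j, q)))).
Proof.
move=> H; split.
  move=> i p; have := H (inl ((i, p), true)); have := H (inl ((i, p), false)).
  by rewrite !eval_box => h1 h2; apply/andP; split; lra.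
split.
  move=> i j p q hE.
  have hi : ind (i, p) (j, q) by [].
  have := H (inr (inl (((i, p), (j, q)), None))).
  have := H (inr (inl (((i, p), (j, q)), Some (true, true)))).
  have := H (inr (inl (((i, p), (j, q)), Some (true, false)))).
  have := H (inr (inl (((i, p), (j, q)), Some (false, true)))).
  have := H (inr (inl (((i, p), (j, q)), Some (false, false)))).
  rewrite !eval_pair // => h1 h2 h3 h4 h5.
  split; [apply/andP; split|..]; lra.
move=> i; have := H (inr (inr (i, true))); have := H (inr (inr (i, false))).
rewrite !eval_eq; lra.
Qed.

Lemma L3 y yy : local_lp_feasible E y yy -> feas (xofy y yy).
Proof.
move=> [H1 [H2 H3]] [[u b]|[[[u v] o]|[i b]]].
- rewrite eval_box /=; have /andP[h1 h2] := H1 u.1 u.2; case: b; lra.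
- case hi : (ind u v); last by rewrite eval_pair0 ?hi.
  rewrite eval_pair //=; have [/andP[h1 h2] h3 h4 h5] := H2 _ _ u.2 v.2 hi.
  by case: o => [[[] []]|] /=; lra.
- rewrite eval_eq /= H3; lra.
Qed.


Lemma L2 x : \sum_k cvec k * x k =
  local_lp_objective E th1 th2 (fun i p => x (inl (i, p))) (fun i j p q => x (inr ((i, p), (j, q)))).
Proof.
rewrite /local_lp_objective big_sumType /=; congr (_ + _).
  rewrite (eq_bigr (fun u => th1 u.1 u.2 * x (inl (u.1, u.2)))); last by move=> [a p].
  by rewrite -(pair_bigA _ (fun a p => th1 a p * x (inl (a, p)))).
pose G i j p q := (if (i, j) \in E then th2 i j p q else 0) * x (inr ((i, p), (j, q))).
transitivity (\sum_i \sum_j \sum_p \sum_q G i j p q).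
  rewrite (eq_bigr (fun uv => G uv.1.1 uv.2.1 uv.1.2 uv.2.2)); last by move=> [[a p] [b q]].
  rewrite -(pair_bigA _ (fun u v => G u.1 v.1 u.2 v.2)) /=.
  under eq_bigr => u _ do rewrite -(pair_bigA _ (fun j q => G u.1 j u.2 q)) /=.
  rewrite -(pair_bigA _ (fun i p => \sum_j \sum_q G i j p q)) /=.
  by apply: eq_bigr => i _; rewrite exchange_big.
rewrite (pair_bigA _ (fun i j => \sum_p \sum_q G i j p q)) /= /= [RHS]big_mkcond /=.
apply: eq_bigr => -[i j] _ /=; rewrite /G /=.
case: ifP => _ //; apply: big1 => p _; apply: big1 => q _; by rewrite mul0r.
Qed.

Lemma L2' y yy : local_lp_objective E th1 th2 y yy = \sum_k cvec k * xofy y yy k.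
Proof. by rewrite L2. Qed.

Definition B := qpbo_pairs P E.

Definition xofz (z : V * P -> bool -> R) (zz : V * P -> V * P -> bool -> bool -> R) (k : X) : R :=
  match k with inl u => z u true | inr uv => zz uv.1 uv.2 true true end.

Lemma L4 z zz : pb_lp_feasible B z zz ->
  forall j, (if j is inr (inr _) then false else true) -> 0 <= eval [set: X] (gfam j) (xofz z zz).
Proof.
move=> [H0 [H0' [H1 H2]]] [[u b]|[[[u v] o]|[i b]]] // _.
- have := H0 u true; have := H0 u false; have := H1 u.
  rewrite eval_box; case: b => /=; lra.
- case hi : (ind u v); last by rewrite eval_pair0 ?hi.
  have huv : (u, v) \in B by rewrite inE.
  have [e1 e2 e3 e4] := H2 u v huv.
  have := H0' u v true true huv; have := H0' u v true false huv.
  have := H0' u v false true huv; have := H0' u v false false huv.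
  have := H0 u true; have := H0 u false; have := H1 u.
  have := H0 v true; have := H0 v false; have := H1 v.
  rewrite eval_pair //=.
  by case: o => [[[] []]|] /=; lra.
Qed.

Lemma L5 (lam : V -> R) z zz :
  pb_lp_objective B (- \sum_i lam i) (fun u : V * P => th1 u.1 u.2 + lam u.1)
    (fun u v : V * P => th2 u.1 v.1 u.2 v.2) z zz =
  \sum_k cvec k * xofz z zz k + \sum_i lam i * (\sum_p xofz z zz (inl (i, p)) - 1).
Proof.
rewrite /pb_lp_objective big_sumType /=.
have -> : \sum_u (th1 u.1 u.2 + lam u.1) * z u true =
   \sum_u th1 u.1 u.2 * z u true + \sum_u lam u.1 * z u true.
  by rewrite -big_split /=; apply: eq_bigr => u _; rewrite mulrDl.
have -> : \sum_u lam u.1 * z u true = \sum_i lam i * \sum_p z (i, p) true.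
  rewrite (eq_bigr (fun u => lam u.1 * z (u.1, u.2) true)); last by move=> [a p].
  rewrite -(pair_bigA _ (fun a p => lam a * z (a, p) true)) /=.
  by apply: eq_bigr => a _; rewrite mulr_sumr.
have -> : \sum_(uv in B) th2 uv.1.1 uv.2.1 uv.1.2 uv.2.2 * zz uv.1 uv.2 true true =
    \sum_uv (if ind uv.1 uv.2 then th2 uv.1.1 uv.2.1 uv.1.2 uv.2.2 else 0) * zz uv.1 uv.2 true true.
  rewrite big_mkcond /=; apply: eq_bigr => uv _; rewrite /B /qpbo_pairs inE /ind.
  by case: ifP => _ //; rewrite mul0r.
have -> : \sum_i lam i * (\sum_p z (i, p) true - 1) = \sum_i lam i * \sum_p z (i, p) true - \sum_i lam i.
  by rewrite -sumrB; apply: eq_bigr => i _; rewrite mulrBr mulr1.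
lra.
Qed.


Definition zofy (y : V -> P -> R) (u : V * P) (b : bool) : R :=
  if b then y u.1 u.2 else 1 - y u.1 u.2.
Definition zzofy (y : V -> P -> R) (yy : V -> V -> P -> P -> R) (u v : V * P) (b1 b2 : bool) : R :=
  let m := yy u.1 v.1 u.2 v.2 in
  match b1, b2 with
  | true, true => m
  | true, false => y u.1 u.2 - m
  | false, true => y v.1 v.2 - m
  | false, false => 1 - y u.1 u.2 - y v.1 v.2 + m end.

Lemma L6 y yy : local_lp_feasible E y yy -> pb_lp_feasible B (zofy y) (zzofy y yy).
Proof.
move=> [H1 [H2 H3]]; split.
  move=> u [] /=; have /andP[h1 h2] := H1 u.1 u.2; rewrite /zofy; lra.
split.
  move=> u v [] [] huv; (have hE : (u.1, v.1) \in E by move: huv; rewrite inE);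
  have [/andP[h1 h2] h3 h4 h5] := H2 _ _ u.2 v.2 hE; rewrite /zzofy /=; lra.
split; first by move=> u; rewrite /zofy; lra.
move=> u v huv; rewrite /zzofy /zofy /=; split; lra.
Qed.

Lemma xofz_zofy y yy k : xofz (zofy y) (zzofy y yy) k = xofy y yy k.
Proof. by case: k. Qed.

Lemma absb (a y : R) : 0 <= y <= 1 -> - `|a| <= a * y.
Proof.
move=> /andP[h1 h2]; case: (lerP 0 a) => ha.
  by rewrite ger0_norm //; nra.
by rewrite ltr0_norm //; nra.
Qed.

Definition K1 := \sum_i \sum_p `|th1 i p| + \sum_(ij in E) \sum_p \sum_q `|th2 ij.1 ij.2 p q|.

Lemma B1 y yy : local_lp_feasible E y yy -> - K1 <= local_lp_objective E th1 th2 y yy.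
Proof.
move=> [H1 [H2 H3]]; rewrite /K1 /local_lp_objective opprD.
apply: lerD.
  rewrite -sumrN; apply: ler_sum => i _; rewrite -sumrN; apply: ler_sum => p _.
  exact: absb.
rewrite -sumrN; apply: ler_sum => ij hij; rewrite -sumrN; apply: ler_sum => p _.
rewrite -sumrN; apply: ler_sum => q _.
have hE : (ij.1, ij.2) \in E by case: ij hij.
by have [h _ _ _] := H2 _ _ p q hE; apply: absb.
Qed.

Lemma B2 (c : R) (a : V * P -> R) (b : V * P -> V * P -> R) z zz :
  pb_lp_feasible B z zz ->
  c - \sum_u `|a u| - \sum_(uv in B) `|b uv.1 uv.2| <= pb_lp_objective B c a b z zz.
Proof.
move=> [H0 [H0' [H1 H2]]]; rewrite /pb_lp_objective -addrA -opprD.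
rewrite -!addrA lerD2l opprD; apply: lerD.
  rewrite -sumrN; apply: ler_sum => u _; apply: absb.
  by have := H0 u true; have := H0 u false; have := H1 u; move=> *; apply/andP; split; lra.
rewrite -sumrN; apply: ler_sum => -[u v] huv; apply: absb.
have [e1 e2 e3 e4] := H2 u v huv.
have := H0' u v true true huv; have := H0' u v true false huv.
have := H0 u true; have := H0 u false; have := H1 u.
by move=> *; apply/andP; split; lra.
Qed.

End App.

Theorem theorem8 (R : realType) (V P : finType) (E : {set V * V})
    (th1 : V -> P -> R) (th2 : V -> V -> P -> P -> R)
    (HP : (0 < #|P|)%N)
    (Eirr : forall i j, (i, j) \in E -> i != j)
    (Easym : forall i j, (i, j) \in E -> (j, i) \notin E) :
  (exists lam : V -> R, D_QPBO E th1 th2 lam = local_lp_value E th1 th2) /\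
  (forall lam : V -> R, D_QPBO E th1 th2 lam <= local_lp_value E th1 th2).
Proof.
case/card_gt0P: HP => p0 _.
pose y0 (i : V) (p : P) : R := (p == p0)%:R.
pose yy0 (i j : V) (p q : P) : R := y0 i p * y0 j q.
have f0 : local_lp_feasible E y0 yy0.
  have hy : forall i p, y0 i p = 0 \/ y0 i p = 1.
    by move=> i p; rewrite /y0; case: (p == p0); [right|left].
  split.
    by move=> i p; case: (hy i p) => ->; rewrite ?lexx ?ler01.
  split.
    move=> i j p q _; rewrite /yy0.
    case: (hy i p) => ->; case: (hy j q) => ->; rewrite ?mulr0 ?mulr1 ?mul0r; split; try (apply/andP; split); lra.
  move=> i; transitivity (\sum_p (p == p0)%:R * (1:R)); first by apply: eq_bigr => p _; rewrite mulr1.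
  exact: sum_delta.
set LS := [set t : R | exists y yy, local_lp_feasible E y yy /\ t = local_lp_objective E th1 th2 y yy]%classic.
have LSne : (LS !=set0)%classic.
  by exists (local_lp_objective E th1 th2 y0 yy0); exists y0, yy0.
have LSlb : has_lbound LS.
  by exists (- K1 E th1 th2) => t [y [yy [hf ->]]]; apply: B1.
have v_def : local_lp_value E th1 th2 = inf LS by [].
have QSlb : forall lam : V -> R, has_lbound [set t : R | exists z zz, pb_lp_feasible (qpbo_pairs P E) z zz /\
     t = pb_lp_objective (qpbo_pairs P E) (- \sum_i lam i) (fun u : V * P => th1 u.1 u.2 + lam u.1)
       (fun u v : V * P => th2 u.1 v.1 u.2 v.2) z zz]%classic.
  move=> lam; eexists => t [z [zz [hf ->]]]; exact: B2 hf.
have part2 : forall lam : V -> R, D_QPBO E th1 th2 lam <= local_lp_value E th1 th2.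
  move=> lam; rewrite v_def; apply: lb_le_inf => // t [y [yy [hf ->]]].
  rewrite /D_QPBO /pb_lp_value; apply: ge_inf; first exact: QSlb.
  exists (zofy y), (zzofy y yy); split; first exact: L6.
  rewrite (L5 E th1 th2 lam) L2'.
  have [_ [_ H3]] := hf.
  have -> : \sum_i lam i * (\sum_p xofz (zofy y) (zzofy y yy) (inl (i, p)) - 1) = 0.
    by apply: big1 => i _; rewrite /= /zofy /= H3 subrr mulr0.
  rewrite addr0.
  by apply: eq_bigr => k _; rewrite xofz_zofy.
split=> //.
have lbx : forall x, feas E x -> inf LS <= \sum_k cvec E th1 th2 k * x k.
  move=> x hx; rewrite L2; apply: ge_inf => //.
  by exists (fun i p => x (inl (i, p))), (fun i j p q => x (inr ((i, p), (j, q)))); split => //; apply: L1.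
have [mu [m0 [mu0 [m00 Hid]]]] := cons_form (ex_intro _ (xofy y0 yy0) (L3 f0)) lbx.
pose lam i := mu (inr (inr (i, false))) - mu (inr (inr (i, true))).
exists lam; apply/le_anti; rewrite part2 /=.
rewrite v_def /D_QPBO /pb_lp_value; apply: lb_le_inf.
  exists (pb_lp_objective (qpbo_pairs P E) (- \sum_i lam i) (fun u : V * P => th1 u.1 u.2 + lam u.1)
       (fun u v : V * P => th2 u.1 v.1 u.2 v.2) (zofy y0) (zzofy y0 yy0)).
  by exists (zofy y0), (zzofy y0 yy0); split => //; apply: L6.
move=> t [z [zz [hf ->]]]; rewrite L5.
have := Hid (xofz z zz).
have -> : \sum_j mu j * eval [set: X V P] (gfam R E j) (xofz z zz) =
   \sum_j mu (inl j) * eval [set: X V P] (gfam R E (inl j)) (xofz z zz) +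
   (\sum_j mu (inr (inl j)) * eval [set: X V P] (gfam R E (inr (inl j))) (xofz z zz) +
    \sum_j mu (inr (inr j)) * eval [set: X V P] (gfam R E (inr (inr j))) (xofz z zz)).
  by rewrite big_sumType /= big_sumType.
have h1 : 0 <= \sum_j mu (inl j) * eval [set: X V P] (gfam R E (inl j)) (xofz z zz).
  by apply: sumr_ge0 => j _; apply: mulr_ge0 => //; apply: L4.
have h2 : 0 <= \sum_j mu (inr (inl j)) * eval [set: X V P] (gfam R E (inr (inl j))) (xofz z zz).
  by apply: sumr_ge0 => j _; apply: mulr_ge0 => //; apply: L4.
have -> : \sum_j mu (inr (inr j)) * eval [set: X V P] (gfam R E (inr (inr j))) (xofz z zz) =
    - \sum_i lam i * (\sum_p xofz z zz (inl (i, p)) - 1).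
  rewrite (eq_bigr (fun j => mu (inr (inr (j.1, j.2))) * eval [set: X V P] (gfam R E (inr (inr (j.1, j.2)))) (xofz z zz))); last by move=> [a b].
  rewrite -(pair_bigA _ (fun i b => mu (inr (inr (i, b))) * eval [set: X V P] (gfam R E (inr (inr (i, b)))) (xofz z zz))).
  rewrite -sumrN; apply: eq_bigr => i _; rewrite big_bool !eval_eq /lam /=; lra.
lra.
Qed.
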